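(* Let $u$ be a node with a set of incident directed edges $(u,v)$, each with identifier $\mathrm{id}(u,v)=\mathrm{id}(u)\circ\mathrm{id}(v)$ (concatenation); each such edge is blue if $v$ is playing and red otherwise, and $u$ does not know which edges are blue. Let $h_1,\dots,h_s$ be independent, perfectly random hash functions mapping edges to $[q]=\{0,\dots,q-1\}$ (the trials); an edge participates in trial $i$ if $h_j(e)=i$ for some $j$. For each trial $i$, $u$ knows $X(i)$ (the XOR of identifiers of all its edges participating in trial $i$), $x(i)$ (their number), $X'(i)$ (the XOR of identifiers of its blue edges participating in trial $i$) and $x'(i)$ (their number). Node $u$ repeatedly does the following while possible: find a trial $i$ with $x(i)=x'(i)+1$, identify the red edge with identifier $X(i)\oplus X'(i)$, and for every trial $i'$ in which this edge participates replace $X(i')$ by $X(i')\oplus$ (its identifier) and decrease $x(i')$ by $1$. Suppose $u$ is incident to at most $p$ red edges, $s\ge 4$ and $q\ge 4esp$. Then for every positive integer $k$, \[ \Pr[u\text{ fails to identify at least }k\text{ red edges}]\le 2\left(\frac{2sk}{q}\right)^{(s-2)k/2}. \]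
   Context: This is the analysis of an identification procedure in which a node $u$ wants to learn which of its neighbors belong to a set of ''playing'' nodes; the values $X'(i),x'(i)$ are assumed to be delivered to $u$ correctly. ''Fails to identify'' refers to red edges that remain unidentified when the procedure stops. *)

(* Defs.v *)
From HB Require Import structures.
From mathcomp Require Import all_boot all_order all_algebra all_field.
From mathcomp Require Import all_classical all_reals all_analysis.
Set Implicit Arguments. Unset Strict Implicit. Unset Printing Implicit Defensive.
Import Order.TTheory GRing.Theory Num.Theory.

(* Edges of u are the elements of a finite type T; identifiers are bit strings
   of length b, i.e. row vectors over F_2 (sum = XOR). *)

Section Peeling.
Variables (T : finType) (b s q : nat).
Variable (id : T -> 'rV['F_2]_b).
Variable (blue : {set T}).
Variable (H : {ffun 'I_s -> {ffun T -> 'I_q}}).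

Definition participates (e : T) (i : 'I_q) : bool := [exists j, H j e == i].

(* D = set of red edges already identified (and removed from X, x) *)
Definition Xc (D : {set T}) (i : 'I_q) : 'rV['F_2]_b :=
  (\sum_(e | participates e i && (e \notin D)) id e)%R.
Definition xc (D : {set T}) (i : 'I_q) : nat :=
  #|[set e | participates e i & e \notin D]|.
Definition Xb (i : 'I_q) : 'rV['F_2]_b :=
  (\sum_(e in blue | participates e i) id e)%R.
Definition xb (i : 'I_q) : nat := #|[set e in blue | participates e i]|.

Definition peel_step (D D' : {set T}) : bool :=
  [exists i : 'I_q, (xc D i == (xb i).+1) &&
     [exists e, [&& e \notin blue, id e == (Xc D i + Xb i)%R & D' == e |: D]]].

Definition peel_stuck (D : {set T}) : bool :=
  ~~ [exists i : 'I_q, xc D i == (xb i).+1].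

Definition fails (k : nat) : bool :=
  [exists D : {set T}, [&& connect peel_step finset.set0 D, peel_stuck D &
                           k <= #|~: blue :\: D|]].
End Peeling.

Definition fail_prob (R : realType) (T : finType) (b s q : nat)
  (id : T -> 'rV['F_2]_b) (blue : {set T}) (k : nat) : R :=
  (#|[set H : {ffun 'I_s -> {ffun T -> 'I_q}} | fails id blue H k]|%:R
   / #|{: {ffun 'I_s -> {ffun T -> 'I_q}}}|%:R)%R.

(* Main.v *)
Require Import Defs.
From HB Require Import structures.
From mathcomp Require Import all_boot all_order all_algebra all_field.
From mathcomp Require Import all_classical all_reals all_analysis.
From mathcomp Require Import lra zify ring.
Import Order.TTheory GRing.Theory Num.Theory.
Local Open Scope ring_scope.

Set Implicit Arguments. Unset Strict Implicit. Unset Printing Implicit Defensive.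
Local Open Scope nat_scope.

Section Comb.
Variables (T : finType) (b s q : nat).
Variable (id : T -> 'rV['F_2]_b).
Variable (blue : {set T}).
Variable (H : {ffun 'I_s -> {ffun T -> 'I_q}}).

Lemma inv_red (D : {set T}) : connect (peel_step id blue H) finset.set0 D -> D \subset ~: blue.
Proof.
move/connectP => [pth Hp ->].
have : (finset.set0 : {set T}) \subset ~: blue by rewrite finset.sub0set.
elim: pth (finset.set0 : {set T}) Hp => [|y pth IH] x //= /andP [Hxy Hpath] Hx.
apply: IH => //.
case/existsP: Hxy => i /andP [_ /existsP [e /and3P [He _ /eqP ->]]].
by rewrite finset.subUset finset.sub1set inE He Hx.
Qed.

Lemma stuck_stop (D : {set T}) : D \subset ~: blue -> peel_stuck blue H D ->
  forall i, #|[set e in ~: blue :\: D | participates H e i]| != 1.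
Proof.
move=> HD Hst i.
have Hne : xc H D i != (xb blue H i).+1.
  by apply/negP => Heq; move/negP: Hst; apply; apply/existsP; exists i.
have Hc : xc H D i = xb blue H i + #|[set e in ~: blue :\: D | participates H e i]|.
  rewrite /xc /xb -(cardsID blue); congr (_ + _); apply: eq_card => e; rewrite !inE.
    case Eb: (e \in blue); rewrite ?andbF ?andbT //=.
    have -> : (e \in D) = false.
      by apply/negP => /(fintype.subsetP HD); rewrite inE Eb.
    by rewrite andbT.
  by case: (e \in blue) => //=; rewrite ?andbF ?andbT // andbC.
by apply/negP => /eqP h; move: Hne; rewrite Hc h addn1 eqxx.
Qed.

Lemma cover_small (S : {set T}) :
  (forall i, #|[set e in S | participates H e i]| != 1) ->
  (#|[set i | [exists e in S, participates H e i]]| * 2 <= s * #|S|)%N.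
Proof.
move=> Hst.
have h1 e : (#|[set i | participates H e i]| <= s)%N.
  have sub : [set i | participates H e i] \subset [set H j e | j in [set: 'I_s]].
    apply/fintype.subsetP => i; rewrite inE => /existsP [j /eqP <-].
    by apply: finset.imset_f; rewrite inE.
  apply: leq_trans (subset_leq_card sub) _.
  apply: leq_trans (leq_imset_card _ _) _.
  by rewrite cardsT card_ord.
have Hdc : (\sum_(e in S) #|[set i | participates H e i]|
          = \sum_i #|[set e in S | participates H e i]|)%N.
  have -> : (\sum_(e in S) #|[set i | participates H e i]|
       = \sum_(e in S) \sum_(i | participates H e i) 1)%N.
    by apply: eq_bigr => e _; rewrite -sum1_card; apply: eq_bigl => i; rewrite inE.
  rewrite (exchange_big_dep predT) //=; apply: eq_bigr => i _.
  by rewrite -sum1_card; apply: eq_bigl => e; rewrite !inE.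
have HL : (\sum_(e in S) #|[set i | participates H e i]| <= s * #|S|)%N.
  apply: (@leq_trans (\sum_(e in S) s)); first by apply: leq_sum => e _; exact: h1.
  by rewrite sum_nat_const mulnC.
apply: leq_trans HL; rewrite Hdc.
rewrite (bigID (fun i => i \in [set i | [exists e in S, participates H e i]])) /=.
apply: leq_trans (leq_addr _ _).
rewrite -sum1_card big_distrl /=.
apply: leq_sum => i; rewrite inE => /existsP [e /andP [eS pe]].
rewrite mul1n; have := Hst i.
have : (0 < #|[set e0 in S | participates H e0 i]|)%N.
  by apply/card_gt0P; exists e; rewrite !inE eS pe.
lia.
Qed.

End Comb.

Lemma pad (X : finType) (A : {set X}) n :
  (#|A| <= n)%N -> (n <= #|X|)%N -> exists B : {set X}, A \subset B /\ #|B| = n.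
Proof.
move=> h1; rewrite -(subnKC h1); move: (n - #|A|)%N => d.
elim: d A {h1} => [|d IH] A h2; first by exists A; rewrite addn0.
have : (0 < #|~: A|)%N by rewrite cardsCs finset.setCK; lia.
case/card_gt0P => x; rewrite inE => xA.
have [B [sB cB]] : exists B : {set X}, x |: A \subset B /\ #|B| = (#|x |: A| + d)%N.
  by apply: IH; rewrite cardsU1 xA /= add1n addSn -addnS.
exists B; split; first by apply: fintype.subset_trans sB; apply: finset.subsetUr.
by rewrite cB cardsU1 xA; lia.
Qed.

Definition Bset (T : finType) (s q : nat) (S : {set T}) (U : {set 'I_q}) :=
  [set H : {ffun 'I_s -> {ffun T -> 'I_q}} | [forall j, [forall e in S, H j e \in U]]].

Lemma foldr_prod (X : Type) (l : seq X) (g : X -> nat) :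
  foldr muln 1 [seq g x | x <- l] = \prod_(x <- l) g x.
Proof. by elim: l => [|x l IH]; rewrite ?big_nil ?big_cons //= IH. Qed.

Lemma card_Bset (T : finType) (s q : nat) (S : {set T}) (U : {set 'I_q}) :
  #|Bset s S U| = (#|U| ^ #|S| * q ^ (#|T| - #|S|)) ^ s.
Proof.
pose F (e : T) := [pred y : 'I_q | (e \in S) ==> (y \in U)].
have cF : #|family F| = (#|U| ^ #|S| * q ^ (#|T| - #|S|))%N.
  rewrite card_family foldr_prod big_enum /=.
  rewrite (bigID (fun e => e \in S)) /=.
  have -> : (\prod_(e | e \in S) #|F e| = \prod_(e in S) #|U|)%N.
    by apply: eq_bigr => e eS; apply: eq_card => y; rewrite !inE eS.
  have -> : (\prod_(e | e \notin S) #|F e| = \prod_(e in ~: S) q)%N.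
    apply: eq_big => e; first by rewrite inE.
    by move=> eS; rewrite -[RHS]card_ord; apply: eq_card => y; rewrite !inE (negbTE eS).
  by rewrite !prod_nat_const [#|~: S|]cardsCs finset.setCK.
pose G (j : 'I_s) := family F.
have -> : #|Bset s S U| = #|family G|.
  apply: eq_card => H; rewrite inE; apply/forallP/familyP => h j.
    apply/familyP => e; rewrite inE; apply/implyP => eS.
    by have /forallP /(_ e) := h j; rewrite eS.
  apply/forallP => e; apply/implyP => eS.
  by have /familyP /(_ e) := h j; rewrite inE eS.
rewrite card_family foldr_prod big_enum /= -cF.
by rewrite prod_nat_const; congr (_ ^ _); exact: card_ord.
Qed.

Local Open Scope ring_scope.

Section RealAux.
Variable R : realType.
Notation E := (expR (1:R)).

Lemma lerX {x y : R} n : 0 <= x -> x <= y -> x ^+ n <= y ^+ n.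
Proof. by move=> x0 xy; apply: lerXn2r; rewrite ?nnegrE // (le_trans x0 xy). Qed.

Lemma E_ge1 : 1 <= E.
Proof. by rewrite -expR0 ler_expR. Qed.

Lemma E_le4 : E <= 4.
Proof.
have h1 : 1/2 <= expR (- (1/2) : R) by have := expR_ge1Dx (- (1/2) : R); lra.
have h2 : expR (1/2 : R) * expR (- (1/2)) = 1 by rewrite expRxMexpNx_1.
have h0 : 0 < expR (1/2 : R) := expR_gt0 _.
have h3 : expR (1/2 : R) <= 2 by nra.
have -> : E = expR (1/2 : R) ^+ 2.
  by rewrite -expRM_natr; congr expR; lra.
nra.
Qed.

Lemma pow_succ_le (m : nat) : (m.+1%:R : R) ^+ m <= E * m%:R ^+ m.
Proof.
case: m => [|m]; first by rewrite !expr0 mulr1 E_ge1.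
have mp : 0 < (m.+1%:R : R) by rewrite ltr0n.
have h : 1 + (m.+1%:R)^-1 <= expR ((m.+1%:R : R)^-1) := expR_ge1Dx _.
have h2 : (1 + (m.+1%:R : R)^-1) ^+ m.+1 <= E.
  apply: (le_trans (lerX m.+1 _ h)).
    by apply: addr_ge0 => //; rewrite invr_ge0 ltW.
  by rewrite -expRM_natr mulVf ?gt_eqF.
have -> : (m.+2%:R : R) = m.+1%:R * (1 + (m.+1%:R)^-1).
  by rewrite mulrDr mulr1 mulfV ?gt_eqF // -natr1.
rewrite exprMn mulrC; apply: ler_wpM2r h2; by rewrite exprn_ge0 // ltW.
Qed.

Lemma pow_le_fact (m : nat) : (m%:R : R) ^+ m <= E ^+ m * m`!%:R.
Proof.
elim: m => [|m IH]; first by rewrite !expr0 mulr1.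
rewrite exprS factS natrM.
apply: (le_trans (ler_wpM2l _ (pow_succ_le m))); first by rewrite ler0n.
rewrite exprS.
have E0 : 0 <= E := ltW (expR_gt0 _).
have : m.+1%:R * (E * m%:R ^+ m) <= m.+1%:R * (E * (E ^+ m * m`!%:R)) :> R.
  by apply: ler_wpM2l; rewrite ?ler0n //; apply: ler_wpM2l.
move=> h; apply: (le_trans h); lra.
Qed.


Lemma ffact_le_exp (n t : nat) : (n ^_ t <= n ^ t)%N.
Proof.
elim: t => [|t IH] //; rewrite ffactnSr expnSr; exact: leq_mul IH (leq_subr _ _).
Qed.

Lemma binom_bound (n t : nat) :
  'C(n, t)%:R * (t%:R : R) ^+ t <= E ^+ t * n%:R ^+ t.
Proof.
have E0 : 0 <= E := ltW (expR_gt0 _).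
apply: (le_trans (ler_wpM2l _ (pow_le_fact t))); first by rewrite ler0n.
rewrite mulrCA; apply: ler_wpM2l; first by rewrite exprn_ge0.
rewrite -natrM bin_ffact -natrX ler_nat; exact: ffact_le_exp.
Qed.


Lemma term_bound (s m r p q : nat) :
  (4 <= s)%N -> (0 < m)%N -> (m <= p)%N -> (r <= p)%N ->
  4 * E * s%:R * p%:R <= q%:R ->
  ('C(r, m)%:R * 'C(q, (s * m)./2)%:R * (((s * m)./2)%:R / q%:R) ^+ (s * m)) ^+ 2
   <= (2 * s%:R * m%:R / q%:R) ^+ ((s - 2) * m) :> R.
Proof.
move=> s4 m0 mp rp hq.
set n := (s * m)%N; set t := n./2.
have E0 : 0 < E := expR_gt0 _.
have E1 := E_ge1; have E4 := E_le4.
have hodd := odd_double_half n.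
have [ht2 ht2'] : (t.*2 <= n /\ n <= t.*2.+1)%N.
  by clear -hodd; move: hodd; case: (odd n) => /= h; lia.
have hn4 : (4 <= n)%N by rewrite /n; clear -s4 m0; nia.
have ht1 : (1 <= t)%N by clear -hn4 ht2'; lia.
have htn : (t <= n)%N by clear -ht2; lia.
have hs : (4:R) <= s%:R by rewrite (ler_nat R 4 s).
have hm : (1:R) <= m%:R by rewrite (ler_nat R 1 m).
have hmp : m%:R <= p%:R :> R by rewrite ler_nat.
have hrp : r%:R <= p%:R :> R by rewrite ler_nat.
set Q := q%:R : R.
have hp1 : 1 <= p%:R :> R by clear -hm hmp; lra.
have h1 : 1 <= s%:R * p%:R :> R by clear -hs hp1; nra.
have h2 : 1 <= E * (s%:R * p%:R) by clear -h1 E1; nra.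
have Q0 : 0 < Q by clear -hq h2; lra.
have hnR : n%:R = s%:R * m%:R :> R by rewrite natrM.
have hnQ : n%:R <= Q.
  have h3 : s%:R * m%:R <= s%:R * p%:R :> R by apply: ler_wpM2l; rewrite ?ler0n.
  rewrite hnR; clear -h3 h1 E1 hq; nra.
have hn0 : 0 < n%:R :> R by rewrite ltr0n; clear -hn4; lia.
have ht2R : 2 * t%:R <= n%:R :> R.
  by rewrite -(ler_nat R) -muln2 natrM in ht2; clear -ht2; lra.
have ht0 : 0 < t%:R :> R by rewrite ltr0n.
have mR0 : (m%:R : R) != 0 by rewrite pnatr_eq0 -lt0n.
have sR0 : (s%:R : R) != 0 by rewrite pnatr_eq0 -lt0n (leq_trans _ s4).
set a := E * p%:R / m%:R.
have a0 : 0 <= a by rewrite /a divr_ge0 // mulr_ge0 ?ler0n // ltW.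
have hC1 : 'C(r, m)%:R <= a ^+ m.
  have m0R : 0 < (m%:R : R) ^+ m by rewrite exprn_gt0 // ltr0n.
  rewrite /a expr_div_n ler_pdivlMr // exprMn.
  apply: (le_trans (binom_bound r m)); apply: ler_wpM2l; first by rewrite exprn_ge0 // ltW.
  by apply: lerX => //; rewrite ler0n.
set b := t%:R / Q.
have b0 : 0 <= b by rewrite /b divr_ge0 // ltW.
have hC2 : 'C(q, t)%:R * b ^+ t <= E ^+ t.
  have Qt : 0 < Q ^+ t by rewrite exprn_gt0.
  rewrite /b expr_div_n mulrA ler_pdivrMr //; exact: binom_bound.
have eq3 : 'C(r, m)%:R * 'C(q, t)%:R * b ^+ n
   = 'C(r, m)%:R * ('C(q, t)%:R * b ^+ t) * b ^+ (n - t).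
  by rewrite -!mulrA -exprD subnKC.
have hT : 'C(r, m)%:R * 'C(q, t)%:R * b ^+ n <= a ^+ m * E ^+ t * b ^+ (n - t).
  rewrite eq3; apply: ler_wpM2r; first by rewrite exprn_ge0.
  apply: ler_pM => //; rewrite ?ler0n ?mulr_ge0 ?exprn_ge0 ?ler0n //.
have T0 : 0 <= 'C(r, m)%:R * 'C(q, t)%:R * b ^+ n by rewrite !mulr_ge0 ?ler0n ?exprn_ge0.
apply: (le_trans (lerX 2 T0 hT)).
set c := n%:R / (2 * Q).
have c0 : 0 <= c by rewrite /c divr_ge0 ?ler0n // mulr_ge0 // ltW.
have hbc : b <= c.
  have -> : c = (n%:R / 2) / Q by rewrite /c; field; exact: lt0r_neq0.
  by rewrite /b (ler_pM2r (_ : 0 < Q^-1)) ?invr_gt0 //; clear -ht2R; lra.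
have c1 : c <= 1.
  have -> : c = (n%:R / 2) / Q by rewrite /c; field; exact: lt0r_neq0.
  by rewrite ler_pdivrMr // mul1r; clear -hnQ hn0; lra.
set d := Q / (4 * n%:R).
have d0 : 0 <= d.
  by rewrite /d; apply: divr_ge0; [exact: ltW | apply: mulr_ge0 => //; exact: ltW].
have ha : a <= d.
  have -> : d = (Q / (4 * s%:R)) / m%:R.
    by rewrite /d hnR; field; rewrite mR0 sR0.
  rewrite /a (ler_pM2r (_ : 0 < m%:R^-1)) ?invr_gt0 ?ltr0n //.
  rewrite ler_pdivlMr; first by clear -hq; lra.
  by rewrite mulr_gt0 // (lt_le_trans _ hs).
set A := 2 * s%:R * m%:R / Q.
have hEc : E * c <= A.
  have -> : A = 4 * c by rewrite /A /c hnR; field; exact: lt0r_neq0.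
  by apply: ler_wpM2r.
have hQ : d * (E * c) = E / 8.
  by rewrite /d /c; field; rewrite (lt0r_neq0 Q0) (lt0r_neq0 hn0).
clearbody a b c d A.
have hE : E ^+ (t * 2) <= E ^+ n by apply: ler_weXn2l => //; clear -ht2; lia.
have hb : b ^+ ((n - t) * 2) <= c ^+ n.
  apply: (le_trans (lerX _ b0 hbc)); apply: ler_wiXn2l => //; clear -ht2; lia.
have ha2 : a ^+ (m * 2) <= d ^+ (m * 2) by apply: lerX.
have hsq : (a ^+ m * E ^+ t * b ^+ (n - t)) ^+ 2
    = a ^+ (m * 2) * E ^+ (t * 2) * b ^+ ((n - t) * 2) by rewrite !exprMn !exprM.
rewrite hsq.
have hsplit : n = (m * 2 + (s - 2) * m)%N by rewrite /n; clear -s4; nia.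
have step1 : a ^+ (m * 2) * E ^+ (t * 2) * b ^+ ((n - t) * 2)
    <= d ^+ (m * 2) * E ^+ n * c ^+ n.
  apply: ler_pM; rewrite ?exprn_ge0 //; first by rewrite mulr_ge0 ?exprn_ge0 // ltW.
  by apply: ler_pM; rewrite ?exprn_ge0 // ltW.
apply: (le_trans step1).
have -> : d ^+ (m * 2) * E ^+ n * c ^+ n
   = (d * (E * c)) ^+ (m * 2) * (E * c) ^+ ((s - 2) * m).
  by rewrite exprMn -[in RHS]mulrA -exprD -hsplit exprMn mulrA.
rewrite hQ -[X in _ <= X]mul1r; apply: ler_pM.
- by rewrite exprn_ge0 // divr_ge0 ?ltW.
- by apply: exprn_ge0; apply: mulr_ge0 => //; exact: ltW.
- by apply: exprn_ile1; [apply: divr_ge0 => //; exact: ltW | clear -E4; lra].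
by apply: lerX => //; apply: mulr_ge0 => //; exact: ltW.
Qed.



Lemma ratio_bound (s m p q : nat) :
  (4 <= s)%N -> (0 < m)%N -> (m < p)%N ->
  4 * E * s%:R * p%:R <= q%:R ->
  (2 * s%:R * m.+1%:R / q%:R) ^+ ((s - 2) * m.+1)
   <= 1/4 * (2 * s%:R * m%:R / q%:R) ^+ ((s - 2) * m) :> R.
Proof.
move=> s4 m0 mp hq.
have E0 : 0 < E := expR_gt0 _.
have E1 := E_ge1; have E4 := E_le4.
have hs : (4:R) <= s%:R by rewrite (ler_nat R 4 s).
have hm : (1:R) <= m%:R by rewrite (ler_nat R 1 m).
have hmp : m.+1%:R <= p%:R :> R by rewrite ler_nat.
set Q := q%:R : R.
have hp1 : 1 <= p%:R :> R by clear -hm hmp; lra.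
have h1 : 1 <= s%:R * p%:R :> R by clear -hs hp1; nra.
have h2 : 1 <= E * (s%:R * p%:R) by clear -h1 E1; nra.
have Q0 : 0 < Q by clear -hq h2; lra.
set a := 2 * s%:R * m%:R / Q.
set b := 2 * s%:R * m.+1%:R / Q.
set f := m.+1%:R / m%:R : R.
have a0 : 0 <= a by rewrite /a; apply: divr_ge0; [rewrite !mulr_ge0 ?ler0n // | exact: ltW].
have f0 : 0 <= f by rewrite /f divr_ge0 ?ler0n.
have hb : b = a * f.
  by rewrite /b /a /f; field; apply/andP; split; apply: lt0r_neq0; clear -Q0 hm; lra.
have hf : f ^+ m <= E.
  rewrite /f expr_div_n ler_pdivrMr ?exprn_gt0 //; last by clear -hm; lra.
  exact: pow_succ_le.
have hbE : b * E <= 1/2.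
  rewrite /b mulrAC ler_pdivrMr //.
  have : 2 * s%:R * m.+1%:R * E <= 2 * s%:R * p%:R * E.
    apply: ler_wpM2r; first exact: ltW.
    by apply: ler_wpM2l => //; rewrite mulr_ge0 ?ler0n.
  clear -hq; lra.
have b0 : 0 <= b by rewrite hb mulr_ge0.
clearbody a b f.
have -> : ((s - 2) * m.+1 = (s - 2) + m * (s - 2))%N by rewrite mulnS mulnC.
rewrite exprD exprM.
have -> : b ^+ m = a ^+ m * f ^+ m by rewrite hb exprMn.
rewrite exprMn -exprM mulnC mulrA.
have hs2 : (2 <= s - 2)%N by clear -s4; lia.
have hx : (b ^+ (s - 2) * a ^+ ((s - 2) * m)) * (f ^+ m) ^+ (s - 2)
      <= (b * E) ^+ (s - 2) * a ^+ ((s - 2) * m).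
  rewrite exprMn mulrAC -mulrA [X in _ <= X]mulrAC -mulrA.
  apply: ler_wpM2l; first by rewrite exprn_ge0.
  rewrite mulrC; apply: ler_wpM2l; first by rewrite exprn_ge0.
  by apply: lerX => //; rewrite exprn_ge0.
apply: (le_trans hx); apply: ler_wpM2r; first by rewrite exprn_ge0.
apply: (le_trans (lerX _ _ hbE)); first by rewrite mulr_ge0 // ltW.
have -> : (1/4 : R) = (1/2) ^+ 2 by rewrite expr2; lra.
by apply: ler_wiXn2l => //; lra.
Qed.

Lemma geom_sum (N k : nat) :
  \sum_(m < N | (k <= m)%N) (1/2 : R) ^+ (m - k) <= 2 - 2 * (1/2) ^+ (N - k).
Proof.
elim: N => [|N IH]; first by rewrite big_ord0 sub0n expr0; lra.
rewrite big_mkcond big_ord_recr /= -big_mkcond /=.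
case: (leqP k N) => hk.
  rewrite subSn // exprS.
  have : 0 <= (1/2 : R) ^+ (N - k) by rewrite exprn_ge0 //; lra.
  lra.
have e1 : (N.+1 - k = 0)%N by clear -hk; lia.
have e2 : (N - k = 0)%N by clear -hk; lia.
by rewrite e1 addr0; rewrite e2 in IH.
Qed.


Lemma Zchain (s k p q d : nat) :
  (4 <= s)%N -> (0 < k)%N -> (k + d <= p)%N ->
  4 * E * s%:R * p%:R <= q%:R ->
  (2 * s%:R * (k + d)%:R / q%:R) ^+ ((s - 2) * (k + d))
   <= (1/4) ^+ d * (2 * s%:R * k%:R / q%:R) ^+ ((s - 2) * k) :> R.
Proof.
move=> s4 k0 hkp hq; elim: d hkp => [|d IH] hkp.
  by rewrite addn0 expr0 mul1r.
have h0 : (0 < k + d)%N by clear -k0; lia.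
have hkp' : (k + d < p)%N by clear -hkp; lia.
rewrite addnS; apply: le_trans (ratio_bound s4 h0 hkp' hq) _.
have IH' := IH (_ : (k + d <= p)%N).
have h4 : (0 : R) <= 1/4 by lra.
apply: le_trans (ler_wpM2l h4 (IH' _)) _; first by clear -hkp; lia.
by rewrite exprS mulrA.
Qed.

End RealAux.

Unset Implicit Arguments.

Lemma card_bigcup_le {I X : finType} {P : pred I} {F : I -> {set X}} :
  (#|\bigcup_(i | P i) F i| <= \sum_(i | P i) #|F i|)%N.
Proof.
apply: (big_rec2 (fun (A : {set X}) n => #|A| <= n)%N); first by rewrite cards0.
move=> i A n _ h; apply: leq_trans (leq_card_setU _ _) _.
by rewrite leq_add2l.
Qed.

Theorem lemma4p2 (R : realType) (T : finType) (b s q p : nat)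
  (id : T -> 'rV['F_2]_b) (blue : {set T}) :
  injective id ->
  (#|~: blue| <= p)%N ->
  (4 <= s)%N ->
  4 * expR 1 * s%:R * p%:R <= q%:R :> R ->
  forall k : nat, (0 < k)%N ->
  fail_prob R s q id blue k <=
    2 * ((2 * s%:R * k%:R / q%:R) `^ (((s - 2) * k)%:R / 2)).
Proof.
move=> _ hr s4 hq k k0.
rewrite /fail_prob.
set red := ~: blue in hr *.
set r := #|red| in hr *.
have E1 := @E_ge1 R.
set Y := (2 * s%:R * k%:R / q%:R) `^ _.
have Y0 : 0 <= Y := powR_ge0 _ _.
have hsp : (s * p <= q)%N.
  rewrite -(ler_nat R) natrM.
  have sp0 : 0 <= s%:R * p%:R :> R by rewrite mulr_ge0 ?ler0n.
  clear -sp0 hq E1; nra.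
have hcount : (#|[set H : {ffun 'I_s -> {ffun T -> 'I_q}} | fails id blue H k]| <=
    \sum_(m < r.+1 | (k <= m)%N)
      \sum_(S in [set S : {set T} | S \subset red & #|S| == m])
        \sum_(U in [set U : {set 'I_q} | #|U| == (s * m)./2]) #|Bset s S U|)%N.
  have sub : [set H : {ffun 'I_s -> {ffun T -> 'I_q}} | fails id blue H k] \subset
     \bigcup_(m < r.+1 | (k <= m)%N)
      \bigcup_(S in [set S : {set T} | S \subset red & #|S| == m])
        \bigcup_(U in [set U : {set 'I_q} | #|U| == (s * m)./2]) Bset s S U.
    apply/fintype.subsetP => H; rewrite inE => /existsP [D /and3P [Hc Hst Hk]].
    have HD := inv_red Hc.
    have Hs := stuck_stop HD Hst.
    have hcov := cover_small Hs.
    set S := ~: blue :\: D in Hk Hs hcov.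
    set U0 := [set i | _] in hcov.
    have mr : (#|S| < r.+1)%N by rewrite ltnS; apply: subset_leq_card; apply: subsetDl.
    have hU0 : (#|U0| <= (s * #|S|)./2)%N.
      by have := half_leq hcov; rewrite muln2 doubleK.
    have htq : ((s * #|S|)./2 <= #|'I_q|)%N.
      rewrite card_ord.
      have h1 : ((s * #|S|)./2 <= s * #|S|)%N.
        by have := odd_double_half (s * #|S|); move=> h; clear -h; case: (odd _) h => /= h; lia.
      apply: leq_trans h1 _.
      apply: leq_trans hsp; apply: leq_mul => //; apply: leq_trans hr.
      by rewrite ltnS in mr.
    have [U [sU cU]] := pad hU0 htq.
    apply/bigcupP; exists (Ordinal mr) => //.
    apply/bigcupP; exists S; first by rewrite inE subsetDl eqxx.
    apply/bigcupP; exists U; first by rewrite inE cU eqxx.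
    rewrite inE; apply/forallP => j; apply/forallP => e; apply/implyP => eS.
    apply: (fintype.subsetP sU); rewrite inE; apply/existsP; exists e.
    by rewrite eS /=; apply/existsP; exists j.
  apply: leq_trans (subset_leq_card sub) _.
  apply: leq_trans card_bigcup_le _; apply: leq_sum => m _.
  apply: leq_trans card_bigcup_le _; apply: leq_sum => S _.
  exact: card_bigcup_le.
case: (ltnP r k) => hrk.
  have : #|[set H : {ffun 'I_s -> {ffun T -> 'I_q}} | fails id blue H k]| = 0%N.
    apply/eqP; rewrite -leqn0; apply: leq_trans hcount _.
    by rewrite big1 // => m hm; have := ltn_ord m; clear -hm hrk; lia.
  move=> ->; rewrite mul0r; apply: mulr_ge0 => //.
have hp : (0 < p)%N by clear -k0 hrk hr; lia.
have hpR : (1:R) <= p%:R by rewrite (ler_nat R 1 p).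
have hsR : (4:R) <= s%:R by rewrite (ler_nat R 4 s).
have Q0 : 0 < q%:R :> R.
  have h1 : 1 <= s%:R * p%:R :> R by clear -hpR hsR; nra.
  have h2 : 1 <= expR 1 * (s%:R * p%:R) :> R by clear -h1 E1; nra.
  clear -h2 hq; lra.
have hN : #|{: {ffun 'I_s -> {ffun T -> 'I_q}}}| = ((q ^ #|T|) ^ s)%N.
  by rewrite !card_ffun !card_ord.
rewrite hN.
set N := ((q ^ #|T|) ^ s)%N.
have N0 : 0 < N%:R :> R by rewrite /N !natrX !exprn_gt0.
have hB (S : {set T}) (U : {set 'I_q}) m : #|S| = m -> #|U| = (s * m)./2 ->
    (#|Bset s S U|)%:R / N%:R = (((s * m)./2)%:R / q%:R) ^+ (s * m) :> R.
  move=> cS cU; have mT : (m <= #|T|)%N by rewrite -cS max_card.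
  rewrite card_Bset cS cU /N !(natrX, natrM).
  set x := ((s * m)./2)%:R : R; set Q := q%:R : R.
  rewrite -expr_div_n [in RHS]mulnC exprM; congr (_ ^+ _).
  have -> : Q ^+ #|T| = Q ^+ m * Q ^+ (#|T| - m) by rewrite -exprD subnKC.
  rewrite (mulrC (Q ^+ m)) invfM mulrA mulfK ?expr_div_n //.
  by rewrite expf_neq0 // lt0r_neq0.
have hsum : (\sum_(m < r.+1 | (k <= m)%N)
      \sum_(S in [set S : {set T} | S \subset red & #|S| == m])
        \sum_(U in [set U : {set 'I_q} | #|U| == (s * m)./2]) #|Bset s S U|)%:R / N%:R
   = \sum_(m < r.+1 | (k <= m)%N) ('C(r, m)%:R * 'C(q, (s * m)./2)%:R
        * (((s * m)./2)%:R / q%:R) ^+ (s * m)) :> R.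
  rewrite natr_sum mulr_suml; apply: eq_bigr => m hm.
  rewrite natr_sum mulr_suml.
  rewrite (eq_bigr (fun _ => 'C(q, (s * m)./2)%:R * (((s * m)./2)%:R / q%:R) ^+ (s * m))).
    by rewrite sumr_const (cards_draws red m) -[_ *+ 'C(_, _)]mulr_natl mulrA.
  move=> S; rewrite inE => /andP [_ /eqP cS].
  rewrite natr_sum mulr_suml.
  rewrite (eq_bigr (fun _ => (((s * m)./2)%:R / q%:R) ^+ (s * m))).
    by rewrite sumr_const (card_draws 'I_q ((s * m)./2)) card_ord -[_ *+ 'C(_, _)]mulr_natl.
  by move=> U; rewrite inE => /eqP cU; apply: hB.
apply: le_trans (_ : _ <= (\sum_(m < r.+1 | (k <= m)%N)
      \sum_(S in [set S : {set T} | S \subset red & #|S| == m])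
        \sum_(U in [set U : {set 'I_q} | #|U| == (s * m)./2]) #|Bset s S U|)%:R / N%:R) _.
  by rewrite ler_pM2r ?invr_gt0 // ler_nat.
rewrite hsum.
have hY2 : Y ^+ 2 = (2 * s%:R * k%:R / q%:R) ^+ ((s - 2) * k).
  have A0 : 0 <= 2 * s%:R * k%:R / q%:R :> R.
    by apply: divr_ge0; [rewrite !mulr_ge0 ?ler0n // | exact: ltW].
  rewrite /Y -powR_mulrn ?powR_ge0 // -powRrM divfK ?pnatr_eq0 //.
  by rewrite powR_mulrn.
apply: le_trans (_ : _ <= \sum_(m < r.+1 | (k <= m)%N) (1/2) ^+ (m - k) * Y) _.
  apply: ler_sum => m hm.
  have mp : (m <= p)%N by have := ltn_ord m; clear -hr; lia.
  have m0 : (0 < m)%N by clear -hm k0; lia.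
  have hT := term_bound s4 m0 mp hr hq.
  have hkm : (k + (m - k) <= p)%N by move: hm mp; clear; lia.
  have hZ := Zchain s4 k0 hkm hq.
  rewrite subnKC // in hZ.
  have T0 : 0 <= 'C(r, m)%:R * 'C(q, (s * m)./2)%:R
        * (((s * m)./2)%:R / q%:R) ^+ (s * m) :> R.
    by rewrite !mulr_ge0 ?ler0n // exprn_ge0 // divr_ge0 ?ler0n // ltW.
  have B0 : 0 <= (1/2 : R) ^+ (m - k) * Y by rewrite mulr_ge0 // exprn_ge0.
  rewrite -ler_sqr ?nnegrE //.
  apply: le_trans hT _; apply: le_trans hZ _.
  have e : ((1/2 : R) ^+ (m - k) * Y) ^+ 2 = (1/4) ^+ (m - k) * Y ^+ 2.
    rewrite exprMn -exprM mulnC exprM; congr (_ ^+ _ * _).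
    by rewrite expr2; lra.
  by rewrite e hY2.
rewrite -mulr_suml.
have hg := @geom_sum R r.+1 k.
have h0 : 0 <= (1/2 : R) ^+ (r.+1 - k) by rewrite exprn_ge0.
have hg2 : \sum_(m < r.+1 | (k <= m)%N) (1/2 : R) ^+ (m - k) <= 2.
  by move: hg h0; clear; lra.
exact: ler_wpM2r.
Qed.
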